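(* Let $r_{\min}\in(0,1)$, $n\ge1$, $\gamma\ge1$ a perfect-square integer, and $\ell\ge0$ an integer with $\gamma^{\ell+1}\le n$. Put $a_\ell=n/\gamma^\ell$, $a_{\ell+1}=a_\ell/\gamma$, $n_\ell=n/(2^\ell\gamma^\ell)$, $n_{\ell+1}=n_\ell/(2\gamma)$, $K_1=\frac{4(1+r_{\min})^2}{\pi r_{\min}^2}$, $K_2=\frac1{2K_1}$, $K_3=4/K_2$, $M=K_22^{-\ell}\gamma$ (all assumed integers, $M$ even), and assume $M\ge100$. Let $V\subset[0,\sqrt{a_\ell}]^2$ with $|V|=n_\ell$ and minimum separation $r_{\min}$, partition $[0,\sqrt{a_\ell}]^2$ into $\gamma$ squarelets of side $\sqrt{a_{\ell+1}}$, and let $\mathcal D$ be a set of $M$ dense squarelets (squarelets containing at least $n_{\ell+1}$ points of $V$). Let $\lambda$ be any permutation traffic matrix on $V$, i.e., a set of $n_\ell$ source–destination pairs $(u,w)$ in which every node is a source exactly once and a destination exactly once. Then one can assign to every pair $(u,w)$ a squarelet $k(u,w)\in\mathcal D$ with $r_{u,k(u,w)}\ge\sqrt{2a_{\ell+1}}$ and $r_{w,k(u,w)}\ge\sqrt{2a_{\ell+1}}$, and partition the set of pairs into at most $\lceil K_32^\ell\rceil$ classes such that within each class every squarelet of $\mathcal D$ is assigned to at most $n_{\ell+1}$ pairs.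
   Context: For a point $u$ and a squarelet $A$, $r_{u,A}=\min_{v\in A}\lVert u-v\rVert$ denotes the Euclidean distance from $u$ to the closest point of $A$. *)

(* Defs.v *)
From Stdlib Require Export Reals Lra List.
Export ListNotations.
Open Scope R_scope.

Definition point : Type := (R * R)%type.

Definition dist2 (u v : point) : R :=
  sqrt ((fst u - fst v)^2 + (snd u - snd v)^2).

(* squarelet index: (i, j) with i, j < g, where gamma = g^2 *)
Definition sqidx : Type := (nat * nat)%type.

Definition in_squarelet (s : R) (k : sqidx) (v : point) : Prop :=
  INR (fst k) * s <= fst v <= INR (S (fst k)) * s /\
  INR (snd k) * s <= snd v <= INR (S (snd k)) * s.

(* r_{u,A} >= t, with r_{u,A} = min_{v in A} ||u - v|| : every point of A is
   at distance at least t from u *)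
Definition r_ge (u : point) (A : point -> Prop) (t : R) : Prop :=
  forall v, A v -> t <= dist2 u v.

(* Cell-assignment used for counting points in squarelets (partition):
   coordinate x lies in cell i iff i s <= x < (i+1) s, the last cell
   (i = g-1) being closed on the right. *)
Definition coord_inb (s : R) (g i : nat) (x : R) : bool :=
  if Rle_dec (INR i * s) x then
    if Rlt_dec x (INR (S i) * s) then true
    else if Nat.eqb (S i) g then (if Req_EM_T x (INR g * s) then true else false)
         else false
  else false.

Definition in_cellb (s : R) (g : nat) (k : sqidx) (v : point) : bool :=
  andb (coord_inb s g (fst k) (fst v)) (coord_inb s g (snd k) (snd v)).

Definition sqidx_eqb (a b : sqidx) : bool :=
  andb (Nat.eqb (fst a) (fst b)) (Nat.eqb (snd a) (snd b)).

Definition Rceil (x : R) : Z := (- (up (- x) - 1))%Z.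

Definition K1 (rmin : R) : R := 4 * (1 + rmin)^2 / (PI * rmin^2).
Definition K2 (rmin : R) : R := 1 / (2 * K1 rmin).
Definition K3 (rmin : R) : R := 4 / K2 rmin.

(* Main.v *)
Require Import Defs.
From Stdlib Require Import Reals List ZArith Permutation.
From Stdlib Require Import Lia Lra Psatz Classical.
Import ListNotations.
Open Scope R_scope.

Definition close (s : R) (u : point) (d : sqidx) : bool :=
  (Z.leb (Z.abs (Z.of_nat (fst d) - (up (fst u / s) - 1))) 2 &&
   Z.leb (Z.abs (Z.of_nat (snd d) - (up (snd u / s) - 1))) 2)%bool.

Lemma floor_bounds (s x : R) : 0 < s ->
  IZR (up (x / s) - 1) * s <= x /\ x < (IZR (up (x / s) - 1) + 1) * s.
Proof.
  intros Hs. destruct (archimed (x / s)) as [H1 H2].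
  rewrite minus_IZR.
  assert (E : x = (x / s) * s) by (field; lra).
  split.
  - rewrite E at 2. apply Rmult_le_compat_r; lra.
  - rewrite E at 1. apply Rmult_lt_compat_r; lra.
Qed.

Lemma coord_far (s x y : R) (i : nat) : 0 < s ->
  (Z.abs (Z.of_nat i - (up (x / s) - 1)) > 2)%Z ->
  INR i * s <= y <= INR (S i) * s -> 4 * (s * s) <= (x - y) ^ 2.
Proof.
  intros Hs Hz [Hy1 Hy2].
  destruct (floor_bounds s x Hs) as [F1 F2].
  set (f := (up (x / s) - 1)%Z) in *.
  rewrite S_INR in Hy2. rewrite INR_IZR_INZ in Hy1, Hy2.
  destruct (Z.abs_spec (Z.of_nat i - f)) as [[Ha Hb]|[Ha Hb]].
  - assert (IZR (Z.of_nat i) >= IZR f + 3).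
    { rewrite <- plus_IZR. apply Rle_ge, IZR_le. lia. }
    assert (y - x >= 2 * s) by nra. nra.
  - assert (IZR (Z.of_nat i) + 3 <= IZR f).
    { rewrite <- plus_IZR. apply IZR_le. lia. }
    assert (x - y >= 2 * s) by nra. nra.
Qed.

Lemma far (a : R) (u : point) (d : sqidx) : 0 < a ->
  close (sqrt a) u d = false ->
  r_ge u (in_squarelet (sqrt a) d) (sqrt (2 * a)).
Proof.
  intros Ha Hc v [Hx Hy]. unfold dist2. apply sqrt_le_1_alt.
  assert (Hs : 0 < sqrt a) by (apply sqrt_lt_R0; auto).
  assert (Hss : sqrt a * sqrt a = a) by (apply sqrt_sqrt; lra).
  unfold close in Hc. apply Bool.andb_false_iff in Hc. destruct Hc as [Hc|Hc];
  apply Z.leb_gt in Hc.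
  - pose proof (coord_far (sqrt a) (fst u) (fst v) (fst d) Hs (ltac:(lia)) Hx) as K.
    assert (0 <= (snd u - snd v)^2) by (apply pow2_ge_0). rewrite Hss in K. lra.
  - pose proof (coord_far (sqrt a) (snd u) (snd v) (snd d) Hs (ltac:(lia)) Hy) as K.
    assert (0 <= (fst u - fst v)^2) by (apply pow2_ge_0). rewrite Hss in K. lra.
Qed.

Definition cand (s : R) (u : point) : list sqidx :=
  flat_map (fun a => map (fun b => (Z.to_nat (up (fst u / s) - 1 + a), Z.to_nat (up (snd u / s) - 1 + b)))
    [(-2)%Z; (-1)%Z; 0%Z; 1%Z; 2%Z]) [(-2)%Z; (-1)%Z; 0%Z; 1%Z; 2%Z].

Lemma cand_len s u : length (cand s u) = 25%nat.
Proof. reflexivity. Qed.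

Lemma close_cand s u d : close s u d = true -> In d (cand s u).
Proof.
  unfold close, cand. intros H. apply Bool.andb_true_iff in H. destruct H as [H1 H2].
  apply Z.leb_le in H1, H2.
  set (fx := (up (fst u / s) - 1)%Z) in *. set (fy := (up (snd u / s) - 1)%Z) in *.
  apply in_flat_map. exists (Z.of_nat (fst d) - fx)%Z. split.
  { assert (Z.of_nat (fst d) - fx = -2 \/ Z.of_nat (fst d) - fx = -1 \/ Z.of_nat (fst d) - fx = 0 \/
      Z.of_nat (fst d) - fx = 1 \/ Z.of_nat (fst d) - fx = 2)%Z as HH by lia.
    simpl. destruct HH as [E|[E|[E|[E|E]]]]; rewrite E; tauto. }
  apply in_map_iff. exists (Z.of_nat (snd d) - fy)%Z. split.
  { replace (fx + (Z.of_nat (fst d) - fx))%Z with (Z.of_nat (fst d)) by lia.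
    replace (fy + (Z.of_nat (snd d) - fy))%Z with (Z.of_nat (snd d)) by lia.
    rewrite !Nat2Z.id. destruct d; reflexivity. }
  assert (Z.of_nat (snd d) - fy = -2 \/ Z.of_nat (snd d) - fy = -1 \/ Z.of_nat (snd d) - fy = 0 \/
      Z.of_nat (snd d) - fy = 1 \/ Z.of_nat (snd d) - fy = 2)%Z as HH by lia.
  simpl. destruct HH as [E|[E|[E|[E|E]]]]; rewrite E; tauto.
Qed.

Open Scope nat_scope.

Lemma sum_ind_le {T : Type} (eqT : T -> T -> bool)
  (eqT_spec : forall a b, eqT a b = true <-> a = b) (x : T) (F : list T) :
  NoDup F -> list_sum (map (fun t => if eqT x t then 1 else 0) F) <= 1.
Proof.
  induction F as [|a F IH]; simpl; intros H; [lia|].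
  inversion H; subst.
  destruct (eqT x a) eqn:E.
  - apply eqT_spec in E; subst.
    assert (list_sum (map (fun t => if eqT a t then 1 else 0) F) = 0).
    { clear -H2 eqT_spec. induction F as [|b F IH]; simpl; auto.
      destruct (eqT a b) eqn:E. apply eqT_spec in E; subst; simpl in H2; tauto.
      simpl in H2; rewrite IH; auto. }
    lia.
  - specialize (IH H3); lia.
Qed.

Lemma sum_cnt_le {P T : Type} (eqT : T -> T -> bool)
  (eqT_spec : forall a b, eqT a b = true <-> a = b) (f : P -> T) (F : list T) :
  NoDup F -> forall ps : list P,
  list_sum (map (fun t => length (filter (fun q => eqT (f q) t) ps)) F) <= length ps.
Proof.
  intros HF ps; induction ps as [|q ps IH]; simpl.
  - clear HF; induction F; simpl; [lia|]; simpl in *; lia.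
  - assert (E : forall F0, list_sum (map (fun t => length (if eqT (f q) t then q :: filter (fun q0 => eqT (f q0) t) ps
            else filter (fun q0 => eqT (f q0) t) ps)) F0) =
        list_sum (map (fun t => if eqT (f q) t then 1 else 0) F0) +
        list_sum (map (fun t => length (filter (fun q => eqT (f q) t) ps)) F0)).
    { induction F0 as [|a F0 IH0]; simpl; auto. destruct (eqT (f q) a); simpl; lia. }
    rewrite E. pose proof (sum_ind_le eqT eqT_spec (f q) F HF). lia.
Qed.

Lemma sum_ge {T : Type} (g : T -> nat) (F : list T) c :
  (forall t, In t F -> c <= g t) -> length F * c <= list_sum (map g F).
Proof.
  induction F as [|a F IH]; simpl; intros H; [lia|].
  specialize (IH (fun t Ht => H t (or_intror Ht))). specialize (H a (or_introl eq_refl)). lia.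
Qed.

Lemma greedy {P T : Type} (eqT : T -> T -> bool)
  (eqT_spec : forall a b, eqT a b = true <-> a = b)
  (Pdec : forall a b : P, {a = b} + {a <> b}) (t0 : T)
  (S : list T) (HS : NoDup S) (al : P -> T -> bool) (A cap : nat) :
  forall ps : list P, NoDup ps ->
  (forall p, In p ps -> A <= length (filter (al p) S)) ->
  length ps <= A * cap ->
  exists s : P -> T, (forall p, In p ps -> In (s p) S /\ al p (s p) = true) /\
    forall t, length (filter (fun q => eqT (s q) t) ps) <= cap.
Proof.
  induction ps as [|p ps IH]; intros Hnd HA Hlen.
  - exists (fun _ => t0); split; simpl; [tauto| intros; lia].
  - inversion Hnd; subst.
    destruct (IH H2 (fun q Hq => HA q (or_intror Hq))) as [s' [Hs1 Hs2]]; [simpl in Hlen; lia|].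
    set (cnt := fun t => length (filter (fun q => eqT (s' q) t) ps)).
    assert (Ex : exists t, In t S /\ al p t = true /\ cnt t < cap).
    { apply NNPP; intro Hno.
      set (F := filter (al p) S).
      assert (HF : NoDup F) by (apply NoDup_filter; auto).
      assert (Hsum := sum_cnt_le eqT eqT_spec s' F HF ps).
      assert (H3 : length F * cap <= list_sum (map cnt F)).
      { apply sum_ge. intros t Ht. unfold F in Ht. apply filter_In in Ht.
        destruct (Nat.lt_ge_cases (cnt t) cap); auto.
        exfalso; apply Hno; exists t; tauto. }
      specialize (HA p (or_introl eq_refl)). fold F in HA.
      simpl in Hlen. unfold cnt in H3.
      assert (A * cap <= length F * cap) by (apply Nat.mul_le_mono_r; auto).
      lia. }
    destruct Ex as [t [Ht1 [Ht2 Ht3]]].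
    exists (fun q => if Pdec q p then t else s' q). split.
    + intros q [Hq|Hq].
      * subst q. destruct (Pdec p p); tauto.
      * destruct (Pdec q p); [subst; tauto|]. apply Hs1; auto.
    + intros t'. simpl. destruct (Pdec p p) as [_|]; [|tauto].
      rewrite (@filter_ext_in _ _ (fun q => eqT (s' q) t') ps).
      2:{ intros a Ha. destruct (Pdec a p); [subst; tauto|auto]. }
      destruct (eqT t t') eqn:E; simpl.
      * apply eqT_spec in E; subst. unfold cnt in Ht3. lia.
      * apply Hs2.
Qed.

Open Scope R_scope.
Lemma NoDup_prod {A B : Type} (l1 : list A) (l2 : list B) :
  NoDup l1 -> NoDup l2 -> NoDup (list_prod l1 l2).
Proof.
  intros H1 H2; induction H1 as [|a l Ha Hl IH]; simpl; [constructor|].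
  apply NoDup_app; auto.
  - apply FinFun.Injective_map_NoDup; auto. intros x y E; inversion E; auto.
  - intros [x y] Hin Hin2. apply in_map_iff in Hin. destruct Hin as [z [E _]]. inversion E; subst.
    apply in_prod_iff in Hin2. tauto.
Qed.

Lemma filter_prod_len {A B : Type} (f : B -> bool) (l1 : list A) (l2 : list B) :
  length (filter (fun t => f (snd t)) (list_prod l1 l2)) = (length l1 * length (filter f l2))%nat.
Proof.
  induction l1 as [|a l IH]; simpl; auto.
  rewrite filter_app, length_app, IH. f_equal.
  clear. induction l2 as [|b l2 IH]; simpl; auto. destruct (f b); simpl; lia.
Qed.

Lemma Rceil_ge x : x <= IZR (Rceil x).
Proof.
  unfold Rceil. destruct (archimed (- x)) as [H1 H2].
  rewrite opp_IZR, minus_IZR. lra.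
Qed.

Definition allowed (s : R) (p : point * point) (d : sqidx) : bool :=
  (negb (close s (fst p) d) && negb (close s (snd p) d))%bool.

Lemma allowed_count (s : R) (p : point * point) (D : list sqidx) (h : nat) :
  NoDup D -> length D = (2 * h)%nat -> (50 <= h)%nat ->
  (h <= length (filter (allowed s p) D))%nat.
Proof.
  intros HD HL Hh.
  pose proof (filter_length (allowed s p) D) as E.
  assert (length (filter (fun x => negb (allowed s p x)) D) <= 50)%nat.
  { replace 50%nat with (length (cand s (fst p) ++ cand s (snd p))) by (rewrite length_app, !cand_len; reflexivity).
    apply NoDup_incl_length. apply NoDup_filter; auto.
    intros d Hd. apply filter_In in Hd. destruct Hd as [_ Hd]. unfold allowed in Hd.
    apply in_or_app. destruct (close s (fst p) d) eqn:E1.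
    - left; apply close_cand; auto.
    - destruct (close s (snd p) d) eqn:E2.
      + right; apply close_cand; auto.
      + simpl in Hd. discriminate. }
  lia.
Qed.

Lemma pdec : forall a b : point * point, {a = b} + {a <> b}.
Proof. decide equality; decide equality; apply Req_EM_T. Qed.

Definition eqT (t t' : nat * sqidx) : bool :=
  andb (Nat.eqb (fst t) (fst t')) (sqidx_eqb (snd t) (snd t')).

Lemma eqT_spec : forall a b, eqT a b = true <-> a = b.
Proof.
  intros [a [b c]] [a' [b' c']]; unfold eqT, sqidx_eqb; simpl.
  rewrite !Bool.andb_true_iff, !Nat.eqb_eq. split; [intros [? [? ?]]; subst; auto|].
  intros E; inversion E; auto.
Qed.

Theorem lemma2
  (rmin : R) (n g l nl nl1 M : nat)
  (V : list point) (D : list sqidx)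
  (lam : list (point * point))
  (Hrmin : 0 < rmin < 1)
  (Hn : (1 <= n)%nat)
  (Hg : (1 <= g)%nat)                               (* gamma = g^2 *)
  (Hgl : ((g * g) ^ (l + 1) <= n)%nat)
  (* a_l = n / gamma^l and a_{l+1} = a_l / gamma are integers *)
  (Hal : exists m : nat, INR m = INR n / (INR (g * g)) ^ l)
  (Hal1 : exists m : nat, INR m = INR n / (INR (g * g)) ^ l / INR (g * g))
  (* n_l = n / (2^l gamma^l), n_{l+1} = n_l / (2 gamma) *)
  (Hnl : INR nl = INR n / (2 ^ l * (INR (g * g)) ^ l))
  (Hnl1 : INR nl1 = INR nl / (2 * INR (g * g)))
  (* M = K2 2^{-l} gamma, even, >= 100 *)
  (HM : INR M = K2 rmin * / 2 ^ l * INR (g * g))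
  (HMeven : Nat.even M = true)
  (HM100 : (100 <= M)%nat)
  (* V : n_l distinct points in [0, sqrt a_l]^2 with minimum separation rmin *)
  (HVnd : NoDup V)
  (HVlen : length V = nl)
  (HVbox : forall v, In v V ->
     0 <= fst v <= sqrt (INR n / (INR (g * g)) ^ l) /\
     0 <= snd v <= sqrt (INR n / (INR (g * g)) ^ l))
  (HVsep : forall u v, In u V -> In v V -> u <> v -> rmin <= dist2 u v)
  (* D : M distinct dense squarelets *)
  (HDnd : NoDup D)
  (HDlen : length D = M)
  (HDidx : forall d, In d D -> (fst d < g)%nat /\ (snd d < g)%nat)
  (HDdense : forall d, In d D ->
     (nl1 <= length (filter
        (in_cellb (sqrt (INR n / (INR (g * g)) ^ l / INR (g * g))) g d) V))%nat)
  (* lam : a permutation traffic matrix on V *)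
  (Hsrc : Permutation (map fst lam) V)
  (Hdst : Permutation (map snd lam) V) :
  exists (k : point * point -> sqidx) (c : point * point -> nat) (m : nat),
    (Z.of_nat m <= Rceil (K3 rmin * 2 ^ l))%Z /\
    (forall p, In p lam ->
       In (k p) D /\
       r_ge (fst p) (in_squarelet (sqrt (INR n / (INR (g * g)) ^ l / INR (g * g))) (k p))
            (sqrt (2 * (INR n / (INR (g * g)) ^ l / INR (g * g)))) /\
       r_ge (snd p) (in_squarelet (sqrt (INR n / (INR (g * g)) ^ l / INR (g * g))) (k p))
            (sqrt (2 * (INR n / (INR (g * g)) ^ l / INR (g * g)))) /\
       (c p < m)%nat) /\
    (forall j d, (j < m)%nat -> In d D ->
       (length (filter (fun p => andb (Nat.eqb (c p) j) (sqidx_eqb (k p) d)) lam) <= nl1)%nat).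
Proof.
  set (a := INR n / INR (g * g) ^ l / INR (g * g)).
  set (gm := INR (g * g)).
  assert (Hgm : 1 <= gm) by (unfold gm; rewrite mult_INR; assert (1 <= INR g) by (apply (le_INR 1); auto); nra).
  assert (Hnpos : 1 <= INR n) by (apply (le_INR 1); auto).
  assert (Ha : 0 < a).
  { unfold a. fold gm. apply Rdiv_lt_0_compat; [|lra]. apply Rdiv_lt_0_compat; [lra|].
    apply pow_lt; lra. }
  destruct (Nat.even_spec M) as [HE _]. destruct (HE HMeven) as [h Hh].
  assert (Hh50 : (50 <= h)%nat) by lia.
  set (x := K3 rmin * 2 ^ l).
  assert (HMpos : 0 < INR M) by (apply lt_0_INR; lia).
  assert (HK2 : K2 rmin <> 0).
  { intro Z0. rewrite Z0 in HM. lra. }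
  assert (Hx : x * INR M = 4 * gm).
  { unfold x, K3. rewrite HM. fold gm. field. split; auto. apply pow_nonzero; lra. }
  assert (Hxpos : 0 < x).
  { apply (Rmult_lt_reg_r (INR M)); auto. lra. }
  assert (Hc := Rceil_ge x).
  assert (HcZ : (0 <= Rceil x)%Z) by (apply le_IZR; lra).
  set (m := Z.to_nat (Rceil x)).
  assert (Hm : INR m = IZR (Rceil x)).
  { unfold m. rewrite INR_IZR_INZ, Z2Nat.id; auto. }
  assert (Hnd : NoDup lam).
  { apply (NoDup_map_inv fst). apply (Permutation_NoDup (Permutation_sym Hsrc)); auto. }
  assert (Hlen : length lam = nl).
  { rewrite <- HVlen, <- (length_map fst). apply Permutation_length; auto. }
  assert (Hcap : (length lam <= (m * h) * nl1)%nat).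
  { rewrite Hlen. apply INR_le. rewrite !mult_INR.
    assert (INR M = 2 * INR h) by (rewrite Hh, mult_INR; simpl; lra).
    assert (INR nl = 2 * gm * INR nl1) by (rewrite Hnl1; fold gm; field; lra).
    assert (0 <= INR nl1) by apply pos_INR.
    assert (INR m * INR M >= 4 * gm) by nra.
    nra. }
  destruct (greedy eqT eqT_spec pdec (0%nat, (0%nat, 0%nat)) (list_prod (seq 0 m) D)
     (NoDup_prod _ _ (seq_NoDup m 0) HDnd)
     (fun p t => allowed (sqrt a) p (snd t)) (m * h) nl1 lam Hnd) as [sl [Hs1 Hs2]]; auto.
  { intros p _. rewrite filter_prod_len, length_seq. apply Nat.mul_le_mono_l.
    apply allowed_count; auto. lia. }
  exists (fun p => snd (sl p)), (fun p => fst (sl p)), m. split; [|split].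
  - unfold m. rewrite Z2Nat.id; auto. fold x. lia.
  - intros p Hp. destruct (Hs1 p Hp) as [Hin Hall]. destruct (sl p) as [j d]. simpl in *.
    apply in_prod_iff in Hin. destruct Hin as [Hj Hd]. apply in_seq in Hj.
    unfold allowed in Hall. apply Bool.andb_true_iff in Hall. destruct Hall as [H1 H2].
    apply Bool.negb_true_iff in H1, H2.
    split; auto. split; [apply far; auto|]. split; [apply far; auto| lia].
  - intros j d _ _. exact (Hs2 (j, d)).
Qed.
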